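(* Let $T\subseteq 2^{<\omega}$ be a tree with $\lambda([T])>0$ and let $\varepsilon>0$. Call $s\in T\cap 2^k$ fat if $\lambda([T]\cap[s])\ge(1-\varepsilon)/2^k$. Then there is $k^*<\omega$ such that for all $k\ge k^*$, the number of fat nodes $s\in T\cap 2^k$ is at least $|T\cap 2^k|\cdot(1-\varepsilon)$.
   Context: A tree is a subset of $2^{<\omega}$ closed under initial segments; $[T]$ is its set of branches in $2^\omega$, $[s]$ is the set of $x\in 2^\omega$ extending $s$, and $\lambda$ is the standard product (Lebesgue) measure on $2^\omega$. *)

(* Defs.v *)
From HB Require Import structures.
From mathcomp Require Import all_boot all_order all_algebra.
From mathcomp Require Import all_classical all_reals all_analysis.
Set Implicit Arguments. Unset Strict Implicit. Unset Printing Implicit Defensive.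
Import Order.TTheory GRing.Theory Num.Theory.

(* Cantor space 2^omega as functions nat -> bool; finite binary strings
   (elements of 2^{<omega}) as seq bool, 2^k = strings of size k. *)

Local Open Scope classical_set_scope.
Local Open Scope ring_scope.

Definition cyl (s : seq bool) : set (nat -> bool) :=
  [set x | forall i, (i < size s)%N -> x i = nth false s i].

Definition cylinders : set (set (nat -> bool)) := [set A | exists s, A = cyl s].

(* 2^omega with the sigma-algebra generated by the cylinders (= Borel sets) *)
Definition cantor_mspace := g_sigma_algebraType cylinders.

Definition restr (x : nat -> bool) (n : nat) : seq bool := [seq x i | i <- iota 0 n].

Definition is_tree (T : pred (seq bool)) : Prop :=
  forall s n, T s -> T (take n s).

Definition body (T : pred (seq bool)) : set cantor_mspace :=
  [set x | forall n, T (restr x n)].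

(* lambda = the standard product (coin-tossing) measure on 2^omega, i.e. a
   measure on the cylinder sigma-algebra with lambda([s]) = 2^{-|s|}
   (such a measure is unique). *)
Definition is_standard_measure {R : realType}
  (mu : {measure set cantor_mspace -> \bar R}) : Prop :=
  forall s : seq bool, mu (cyl s) = ((2%:R ^- size s : R)%:E)%E.

Definition level_count (T : pred (seq bool)) (k : nat) : nat :=
  #|[set t : k.-tuple bool | T (tval t)]|.

(* Main.v *)
Require Import Defs.
From HB Require Import structures.
From mathcomp Require Import all_boot all_order all_algebra.
From mathcomp Require Import all_classical all_reals all_analysis.
From mathcomp Require Import lra.
Import Order.TTheory GRing.Theory Num.Theory.
Import numFieldNormedType.Exports.
Local Open Scope classical_set_scope.
Local Open Scope ring_scope.

Lemma size_restr x n : size (restr x n) = n.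
Proof. by rewrite size_map size_iota. Qed.

Lemma cyl_restr (x : nat -> bool) (s : seq bool) : cyl s x <-> restr x (size s) = s.
Proof.
split.
- move=> H; apply: (@eq_from_nth _ false); first by rewrite size_restr.
  move=> i; rewrite size_restr => Hi.
  by rewrite (nth_map 0%N) ?size_iota // nth_iota // add0n H.
- move=> <- i; rewrite size_restr => Hi.
  by rewrite (nth_map 0%N) ?size_iota // nth_iota.
Qed.

Lemma restr_take x n m : (m <= n)%N -> take m (restr x n) = restr x m.
Proof.
move=> H; rewrite /restr -map_take; congr map.
by rewrite -{1}(subnKC H) iotaD take_size_cat // size_iota.
Qed.

Lemma cyl_meas s : measurable (cyl s : set cantor_mspace).
Proof. by apply: sub_sigma_algebra; exists s. Qed.

Definition rtup x k : k.-tuple bool := @Tuple k bool (restr x k) (introT eqP (size_restr x k)).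

Lemma cyl_disj k (t t' : k.-tuple bool) : t != t' -> cyl t `&` cyl t' = set0.
Proof.
move=> /eqP ne; apply/seteqP; split => // x [/cyl_restr h1 /cyl_restr h2].
apply: ne; apply: val_inj => /=; by rewrite -h1 -h2 !size_tuple.
Qed.

Section M.
Variables (R : realType) (mu : {measure set cantor_mspace -> \bar R}).

Lemma add_seq k (G : k.-tuple bool -> set cantor_mspace) (r : seq (k.-tuple bool)) :
  uniq r -> (forall t, measurable (G t)) -> (forall t, G t `<=` cyl t) ->
  mu (\big[setU/set0]_(t <- r) G t) = (\sum_(t <- r) mu (G t))%E.
Proof.
move=> + mG sG; elim: r => [|a r IH] /=; first by rewrite !big_nil measure0.
move=> /andP[ar ur]; rewrite !big_cons measureU ?(IH ur) //.
all: try by apply: bigsetU_measurable => t _; exact: mG.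
all: try exact: mG.
  by congr (_ + _)%E; exact: (IH ur).
apply/seteqP; split => // x [Ga].
rewrite -bigcup_seq => -[b /= br Gb].
have : cyl a `&` cyl b = set0 by apply: cyl_disj; apply: contraNneq ar => ->.
by move/seteqP => [+ _] => /(_ x) /=; apply; split; [apply: sG | apply: sG].
Qed.
End M.

Lemma alg (K : realFieldType) (S F N c e m : K): 0<c -> 0<e -> e<1 -> F+N = S ->
  m <= F*c + N*((1-e)*c) -> S*c*(1-e^+2) < m -> S*(1-e) <= F.
Proof.
move=> c0 e0 e1 FN h1 h2.
have h3 : N*(e*c) < (S*e)*(e*c).
  have : S*c*(1-e^+2) < F*c + N*((1-e)*c) by apply: lt_le_trans h2 h1.
  rewrite -FN; lra.
have h4 : N < S*e by rewrite -(ltr_pM2r (mulr_gt0 e0 c0)).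
lra.
Qed.

Theorem lemma12p2 (R : realType) (mu : {measure set cantor_mspace -> \bar R})
  (T : pred (seq bool)) (eps : R) :
  is_standard_measure mu ->
  is_tree T ->
  (0 < mu (body T))%E ->
  0 < eps ->
  exists kstar : nat, forall k : nat, (kstar <= k)%N ->
    (level_count T k)%:R * (1 - eps) <=
    (#|[set t : k.-tuple bool | T (tval t) &
         `[< (((1 - eps) / 2%:R ^+ k)%:E <= mu (body T `&` cyl (tval t)))%E >] ]|)%:R.
Proof.
move=> hstd htree hpos he.
have [e1|e1] := leP 1 eps.
  exists 0%N => k _; apply: le_trans (ler0n _ _).
  by rewrite mulr_ge0_le0 // subr_le0.
pose V k : set cantor_mspace := [set x | T (restr x k)].
pose S k := [set t : k.-tuple bool | T (tval t)].
have cyl_size : forall k (t : k.-tuple bool) x, cyl t x <-> restr x k = t.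
  by move=> k t x; rewrite -{2}(size_tuple t); exact: cyl_restr.
have Veq : forall k, V k = \big[setU/set0]_(t <- enum (S k)) cyl t.
  move=> k; rewrite -bigcup_seq; apply/seteqP; split => x /=.
    move=> Vx; exists (rtup x k); first by rewrite /= mem_enum inE.
    by apply/cyl_size.
  move=> [t]; rewrite /= mem_enum inE => Tt /cyl_size.
  by rewrite /V /= => ->.
have mV : forall k, measurable (V k).
  by move=> k; rewrite Veq; apply: bigsetU_measurable => t _; exact: cyl_meas.
have muV : forall k, mu (V k) = ((#|S k|)%:R * (2%:R ^+ k)^-1)%:E.
  move=> k; rewrite Veq add_seq; [|exact: enum_uniq|exact: cyl_meas|by move=> t].
  under eq_bigr => t _ do rewrite hstd size_tuple.
  by rewrite sumEFin big_enum /= sumr_const mulr_natl.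
have bodyE : body T = \bigcap_n V n.
  by apply/seteqP; split => x /= h n; [move=> _|]; apply: h.
have mbody : measurable (body T).
  by rewrite bodyE; apply: bigcap_measurableType => i _; exact: mV.
have bodyV : forall k, body T `<=` V k by move=> j x h; exact: h.
have mfin : mu (body T) \is a fin_num.
  rewrite ge0_fin_numE ?measure_ge0 //; apply: (@le_lt_trans _ _ (mu (V 0%N))); last by rewrite muV ltry.
  by apply: le_measure; rewrite ?inE //; exact: bodyV.
set m := fine (mu (body T)).
have mE : mu (body T) = m%:E by rewrite fineK.
have mpos : 0 < m by rewrite -lte_fin -mE.
have cv : (fun k => mu (V k)) @ \oo --> mu (body T).
  rewrite bodyE; apply: nonincreasing_cvg_mu => //.
  - by rewrite muV; exact: ltry.
  - by rewrite -bodyE.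
  - move=> n p np; apply/subsetPset => x; rewrite /V /= => Tx.
    by rewrite -(@restr_take x p n np); exact: htree.
have eqf : (fun k => mu (V k)) = (fun k => ((#|S k|)%:R * (2%:R ^+ k)^-1)%:E).
  by apply: funext => k; exact: muV.
rewrite eqf mE in cv.
have cv2 : (fun k : nat => ((#|S k|)%:R * (2%:R ^+ k)^-1 : R)) @ \oo --> (m : R).
  by move/fine_cvgP: cv => [_ h]; exact: h.
have e2 : 0 < 1 - eps ^+ 2 by nra.
have hz : m < m / (1 - eps ^+ 2).
  by rewrite ltr_pdivlMr //; have := mulr_gt0 mpos (exprn_gt0 2 he); lra.
have [N _ HN] : \forall k \near \oo, (#|S k|%:R / 2 ^+ k : R) < m / (1 - eps ^+ 2).
  by apply: cvgr_lt hz; exact: cv2.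
exists N => k /HN hk.
set c := (2%:R ^+ k)^-1 : R.
have c0 : 0 < c by rewrite invr_gt0 exprn_gt0.
pose b (t : k.-tuple bool) := `[< (((1 - eps) / 2%:R ^+ k)%:E <= mu (body T `&` cyl (tval t)))%E >].
pose Fat := [set t : k.-tuple bool | T (tval t) & b t].
pose NF := [set t : k.-tuple bool | T (tval t) & ~~ b t].
have mI : forall t : k.-tuple bool, measurable (body T `&` cyl t).
  by move=> t; apply: measurableI mbody (cyl_meas t).
have hsum : mu (body T) = (\sum_(t <- enum (S k)) mu (body T `&` cyl t))%E.
  have E : body T = \big[setU/set0]_(t <- enum (S k)) (body T `&` cyl t).
    rewrite -bigcup_seq; apply/seteqP; split => x.
      move=> bx; exists (rtup x k); first by rewrite /= mem_enum inE; exact: bx.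
      by split => //; apply/cyl_size.
    by move=> [t _ [bx _]].
  rewrite {1}E add_seq; [done|exact: enum_uniq|exact: mI|by move=> t x []].
have hle : (mu (body T) <= (\sum_(t in S k) (if b t then c else (1 - eps) * c))%:E)%E.
  rewrite hsum -sumEFin -big_enum /=; apply: lee_sum => t _.
  case: ifP => bt.
    have := hstd t; rewrite size_tuple => hc.
    rewrite /c -hc; apply: le_measure; rewrite ?inE; [exact: mI|exact: cyl_meas|exact: subIsetr].
  move/negbT: bt => /asboolPn bt.
  by apply/ltW; rewrite ltNge; apply/negP.
have memS : forall t : k.-tuple bool, (t \in S k) = T t.
  by move=> t; apply/idP/idP => h; [exact: (set_mem h) | exact: (mem_set h)].
have hsplit : \sum_(t in S k) (if b t then c else (1 - eps) * c) =
    #|Fat|%:R * c + #|NF|%:R * ((1 - eps) * c).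
  rewrite (bigID b) /=; congr (_ + _).
    rewrite (eq_bigr (fun=> c)); last by move=> t /andP[_ ->].
    rewrite (eq_bigl (fun t => t \in Fat)); last by move=> t; rewrite memS /Fat !finset.inE.
    by rewrite sumr_const mulr_natl.
  rewrite (eq_bigr (fun=> (1 - eps) * c)); last by move=> t /andP[_ nb]; rewrite (negbTE nb).
  rewrite (eq_bigl (fun t => t \in NF)); last by move=> t; rewrite memS /NF !finset.inE.
  by rewrite sumr_const mulr_natl.
have hcard : (#|Fat| + #|NF|)%N = #|S k|.
  have -> : #|S k| = #|[pred t : k.-tuple bool | T t]|.
    by apply: eq_card => t; rewrite memS.
  rewrite -(cardID b [pred t : k.-tuple bool | T t]); congr (_ + _)%N; apply: eq_card => t;
  by rewrite /Fat /NF !finset.inE ?(andbC (~~ _)) ?unfold_in.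
rewrite hsplit mE lee_fin in hle.
apply: (@alg _ _ _ (#|NF|%:R) c eps m) => //.
- by rewrite -natrD hcard.
- by rewrite -(ltr_pdivlMr _ _ e2).
Qed.
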